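(* Let $\nu$ be a Krull valuation on $\mathbb{K}[x]$, $\mu$ an extension of $\nu$ to $\overline{\mathbb{K}}[x]$, $f\in\mathbb{K}[x]$ non-constant and $a\in\overline{\mathbb{K}}$ an optimizing root of $f$. Then $\nu(f)\in\mu\overline{\mathbb{K}}$ if and only if $\delta(f)\in\mu\overline{\mathbb{K}}$.
   Context: $\overline{\mathbb{K}}$ is an algebraic closure of $\mathbb{K}$, $\mu\overline{\mathbb{K}}$ the value group of $\mu$ restricted to $\overline{\mathbb{K}}$. For non-constant $f$, $\delta(f)=\max\{\mu(x-c):c\in\overline{\mathbb{K}},f(c)=0\}$, and a root $c$ with $\mu(x-c)=\delta(f)$ is an optimizing root. *)

(* Defs.v *)
From HB Require Import structures.
From mathcomp Require Import all_boot all_order all_algebra.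
Set Implicit Arguments. Unset Strict Implicit. Unset Printing Implicit Defensive.
Import Order.TTheory GRing.Theory Num.Theory.
Local Open Scope ring_scope.

Record ordered_group (G : zmodType) := OrderedGroup {
  ogle : rel G;
  ogle_refl : forall x, ogle x x;
  ogle_anti : forall x y, ogle x y -> ogle y x -> x = y;
  ogle_trans : forall x y z, ogle x y -> ogle y z -> ogle x z;
  ogle_total : forall x y, ogle x y || ogle y x;
  ogle_add : forall x y z, ogle x y -> ogle (x + z) (y + z)
}.

(* Gamma_oo = Gamma \cup {oo}, with None playing the role of oo. *)
Definition ext_le (G : zmodType) (O : ordered_group G) (a b : option G) : Prop :=
  match a, b with
  | _, None => True
  | None, Some _ => False
  | Some x, Some y => ogle O x y
  end.

Definition ext_add (G : zmodType) (a b : option G) : option G :=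
  match a, b with
  | Some x, Some y => Some (x + y)
  | _, _ => None
  end.

Definition krull_valuation (A : comNzRingType) (G : zmodType) (O : ordered_group G)
    (v : A -> option G) : Prop :=
  [/\ v 0 = None, v 1 = Some 0,
      forall a b, v (a * b) = ext_add (v a) (v b)
    & forall a b, ext_le O (match v a, v b with
                            | Some x, Some y => Some (if ogle O x y then x else y)
                            | None, w => w
                            | w, None => w
                            end) (v (a + b))].

(* Membership in mu(Kbar) = { mu(c) : c in Kbar, c <> 0 }, the value group of
   mu restricted to Kbar (constants of Kbar[x]). *)
Definition in_value_group (L : fieldType) (G : zmodType)
    (mu : {poly L} -> option G) (g : option G) : Prop :=
  exists c : L, c != 0 /\ mu c%:P = g.

Definition is_delta (K : fieldType) (L : fieldType) (iota : {rmorphism K -> L})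
    (G : zmodType) (O : ordered_group G) (mu : {poly L} -> option G)
    (f : {poly K}) (d : option G) : Prop :=
  (exists c : L, root (map_poly iota f) c /\ mu ('X - c%:P) = d) /\
  (forall c : L, root (map_poly iota f) c -> ext_le O (mu ('X - c%:P)) d).

Definition optimizing_root (K : fieldType) (L : fieldType) (iota : {rmorphism K -> L})
    (G : zmodType) (O : ordered_group G) (mu : {poly L} -> option G)
    (f : {poly K}) (a : L) : Prop :=
  root (map_poly iota f) a /\
  (forall c : L, root (map_poly iota f) c -> ext_le O (mu ('X - c%:P)) (mu ('X - a%:P))).

(* Main.v *)
Require Import Defs.
From HB Require Import structures.
From mathcomp Require Import all_boot all_order all_algebra.
Import GRing.Theory.
Set Implicit Arguments. Unset Strict Implicit.
Local Open Scope ring_scope.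

Lemma og_addl (G : zmodType) (O : ordered_group G) x y z :
  ogle O x y -> ogle O (z + x) (z + y).
Proof. by move=> h; rewrite ![z + _]addrC; apply: ogle_add. Qed.

Lemma og_nonneg_mul (G : zmodType) (O : ordered_group G) (m : G) k :
  ogle O 0 m -> ogle O 0 (m *+ k).
Proof.
move=> h; elim: k => [|k IH]; first by rewrite mulr0n (ogle_refl O).
rewrite mulrS; apply: ogle_trans IH _.
by have := ogle_add (m *+ k) h; rewrite add0r addrC.
Qed.

Lemma og_tf_pos (G : zmodType) (O : ordered_group G) (m : G) k :
  (0 < k)%N -> ogle O 0 m -> m *+ k = 0 -> m = 0.
Proof.
case: k => // k _ h0 hk.
apply/esym; apply: (ogle_anti h0).
have h1 := og_addl m (og_nonneg_mul k h0).
by rewrite addr0 -mulrS hk in h1.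
Qed.

Lemma og_tf (G : zmodType) (O : ordered_group G) (m : G) k :
  (0 < k)%N -> m *+ k = 0 -> m = 0.
Proof.
move=> hk h.
case/orP: (ogle_total O 0 m) => h0; first exact: og_tf_pos h0 h.
have h1 : ogle O 0 (- m) by have := ogle_add (- m) h0; rewrite subrr add0r.
have := og_tf_pos hk h1; rewrite mulNrn h oppr0 => /(_ erefl) /eqP.
by rewrite oppr_eq0 => /eqP.
Qed.

Lemma ext_le_anti (G : zmodType) (O : ordered_group G) (a b : option G) :
  ext_le O a b -> ext_le O b a -> a = b.
Proof.
by case: a b => [x|] [y|] //= h1 h2; rewrite (ogle_anti h1 h2).
Qed.

Lemma mu_mul (L : fieldType) (G : zmodType) (O : ordered_group G)
  (mu : {poly L} -> option G) (hmu : krull_valuation O mu) p q :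
  mu (p * q) = ext_add (mu p) (mu q).
Proof. by case: hmu. Qed.

Lemma mu_const (L : fieldType) (G : zmodType) (O : ordered_group G)
  (mu : {poly L} -> option G) (hmu : krull_valuation O mu) (c : L) :
  c != 0 -> exists z, mu c%:P = Some z /\ mu (c^-1)%:P = Some (- z).
Proof.
move=> hc.
have h : mu (c%:P * (c^-1)%:P) = Some 0.
  by rewrite -polyCM mulfV // (_ : 1%:P = 1) //; case: hmu.
rewrite (mu_mul hmu) in h.
move: h; case: (mu c%:P) => [z|] //; case: (mu (c^-1)%:P) => [w|] //= [h].
exists z; split => //; congr Some.
by apply/eqP; rewrite -addr_eq0 addrC h.
Qed.

Lemma mu_neg (L : fieldType) (G : zmodType) (O : ordered_group G)
  (mu : {poly L} -> option G) (hmu : krull_valuation O mu) p :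
  mu (- p) = mu p.
Proof.
have hn1 : mu (-1) = Some 0.
  have h : mu ((-1) * (-1)) = Some 0 by rewrite mulrNN mulr1; case: hmu.
  rewrite (mu_mul hmu) in h.
  move: h; case: (mu (-1)) => [m|] //= [h].
  by rewrite (@og_tf _ O m 2) // mulr2n.
by rewrite -mulN1r (mu_mul hmu) hn1; case: (mu p) => //= x; rewrite add0r.
Qed.

Lemma ultra1 (L : fieldType) (G : zmodType) (O : ordered_group G)
  (mu : {poly L} -> option G) (hmu : krull_valuation O mu) p q x y z :
  mu p = Some x -> mu q = Some y -> mu (p + q) = Some z -> ogle O x y -> ogle O x z.
Proof.
move=> hp hq hpq hxy; case: hmu => _ _ _ /(_ p q).
by rewrite hp hq hpq /= hxy.
Qed.

Lemma ultra2 (L : fieldType) (G : zmodType) (O : ordered_group G)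
  (mu : {poly L} -> option G) (hmu : krull_valuation O mu) p q x y z :
  mu p = Some x -> mu q = Some y -> mu (p + q) = Some z -> ogle O y x -> ogle O y z.
Proof. by move=> hp hq hpq; apply: (ultra1 hmu hq hp); rewrite addrC. Qed.

Lemma mu_exp (L : fieldType) (G : zmodType) (O : ordered_group G)
  (mu : {poly L} -> option G) (hmu : krull_valuation O mu) p m k :
  mu p = Some m -> mu (p ^+ k) = Some (m *+ k).
Proof.
move=> hp; elim: k => [|k IH].
  by rewrite expr0 mulr0n; case: hmu.
by rewrite exprS (mu_mul hmu) hp IH /= mulrS.
Qed.

Lemma vg_add (L : fieldType) (G : zmodType) (O : ordered_group G)
  (mu : {poly L} -> option G) (hmu : krull_valuation O mu) x y :
  in_value_group mu (Some x) -> in_value_group mu (Some y) ->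
  in_value_group mu (Some (x + y)).
Proof.
move=> [c [hc hx]] [e [he hy]]; exists (c * e); split; first by rewrite mulf_neq0.
by rewrite polyCM (mu_mul hmu) hx hy.
Qed.

Lemma vg_opp (L : fieldType) (G : zmodType) (O : ordered_group G)
  (mu : {poly L} -> option G) (hmu : krull_valuation O mu) x :
  in_value_group mu (Some x) -> in_value_group mu (Some (- x)).
Proof.
move=> [c [hc hx]]; have [z [h1 h2]] := mu_const hmu hc.
exists c^-1; split; first by rewrite invr_eq0.
by rewrite h2; move: hx; rewrite h1 => -[->].
Qed.

Lemma vg_none (L : fieldType) (G : zmodType) (O : ordered_group G)
  (mu : {poly L} -> option G) (hmu : krull_valuation O mu) :
  ~ in_value_group mu None.
Proof.
move=> [c [hc h]]; have [z [h1 _]] := mu_const hmu hc; by rewrite h1 in h.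
Qed.

Lemma prod_val (L : fieldType) (G : zmodType) (O : ordered_group G)
  (mu : {poly L} -> option G) (hmu : krull_valuation O mu) (dl : G) (a : L)
  (ha : mu ('X - a%:P) = Some dl) (s : seq L) :
  (forall c, c \in s -> mu ('X - c%:P) = Some dl \/
       exists y, mu ('X - c%:P) = Some y /\ in_value_group mu (Some y)) ->
  exists k w, in_value_group mu (Some w) /\
    mu (\prod_(z <- s) ('X - z%:P)) = Some (dl *+ k + w) /\ (a \in s -> (0 < k)%N).
Proof.
elim: s => [|c s IH] hs.
  exists 0%N, 0; split; first by exists 1; split; [exact: oner_neq0| case: hmu].
  by rewrite big_nil mulr0n addr0; split => //; case: hmu.
have [k [w [hw [hp hk]]]] : exists k w, in_value_group mu (Some w) /\
    mu (\prod_(z <- s) ('X - z%:P)) = Some (dl *+ k + w) /\ (a \in s -> (0 < k)%N).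
  by apply: IH => e he; apply: hs; rewrite inE he orbT.
rewrite big_cons (mu_mul hmu) hp.
case: (boolP (mu ('X - c%:P) == Some dl)) => [/eqP hc|hc].
  exists k.+1, w; split => //; rewrite hc /=; split; first by rewrite mulrS addrA.
  by [].
have [hc'|[y [hy hvy]]] := hs c (mem_head _ _); first by rewrite hc' eqxx in hc.
exists k, (y + w); split; first exact: (vg_add hmu hvy hw).
rewrite hy /=; split; first by congr Some; rewrite addrCA.
rewrite inE => /orP [/eqP hac|]; last exact: hk.
by rewrite -hac ha eqxx in hc.
Qed.

Theorem lemma3p5
  (K : fieldType) (L : closedFieldType) (iota : {rmorphism K -> L})
  (L_alg : forall z : L, exists p : {poly K}, p != 0 /\ root (map_poly iota p) z)
  (G : zmodType) (O : ordered_group G)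
  (nu : {poly K} -> option G) (mu : {poly L} -> option G)
  (hnu : krull_valuation O nu) (hmu : krull_valuation O mu)
  (hext : forall p : {poly K}, mu (map_poly iota p) = nu p)
  (f : {poly K}) (hf : (1 < size f)%N)
  (d : option G) (hd : is_delta iota O mu f d)
  (a : L) (ha : optimizing_root iota O mu f a) :
  in_value_group mu (nu f) <-> in_value_group mu d.
Proof.
rewrite -hext.
set g := map_poly iota f.
case: ha => hga hmax.
have hdd : d = mu ('X - a%:P).
  case: hd => [[c0 [hc0 <-]] hb]; apply: ext_le_anti; last exact: hb.
  exact: hmax.
rewrite hdd.
case ea: (mu ('X - a%:P)) => [dl|]; last first.
  have [q hq] := factor_theorem _ _ hga.
  rewrite /g hq (mu_mul hmu) ea; case: (mu q) => /=;
  by split => /(vg_none hmu).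
have hg0 : g != 0 by rewrite -size_poly_gt0 /g size_map_poly; apply: ltn_trans hf.
have hlc : lead_coef g != 0 by rewrite lead_coef_eq0.
have [r hr] := closed_field_poly_normal g.
have hroot : forall c, root g c = (c \in r).
  by move=> c; rewrite [in LHS]hr rootZ // root_prod_XsubC.
have hs : forall c, c \in r -> mu ('X - c%:P) = Some dl \/
       exists y, mu ('X - c%:P) = Some y /\ in_value_group mu (Some y).
  move=> c; rewrite -hroot => /hmax; rewrite ea.
  case ec: (mu ('X - c%:P)) => [y|] //= hyd.
  case: (boolP (y == dl)) => [/eqP ->|hne]; first by left.
  right; exists y; split => //.
  have hac : a - c != 0.
    by rewrite subr_eq0; apply: contraNneq hne => hac; move: ec; rewrite -hac ea => -[->].
  have [z [hz _]] := mu_const hmu hac.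
  exists (a - c); split => //; rewrite hz; congr Some.
  have e1 : 'X - c%:P = ('X - a%:P) + (a - c)%:P by rewrite polyCB addrA subrK.
  have e2 : (a - c)%:P = ('X - c%:P) + - ('X - a%:P)
    by rewrite e1 addrAC subrr add0r.
  have ec' : mu (('X - a%:P) + (a - c)%:P) = Some y by rewrite -e1.
  have ec2 : mu (('X - c%:P) + - ('X - a%:P)) = Some z by rewrite -e2.
  have hna : mu (- ('X - a%:P)) = Some dl by rewrite (mu_neg hmu).
  apply: ogle_anti.
  - case/orP: (ogle_total O z dl) => hzd.
      exact: (ultra2 hmu ea hz ec' hzd).
    have hdy := ultra1 hmu ea hz ec' hzd.
    by exfalso; move/eqP: hne => H; apply: H; exact: (ogle_anti hyd hdy).
  - exact: (ultra1 hmu ec hna ec2 hyd).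
have [k [w [hw [hp hk]]]] := prod_val hmu ea hs.
have hk0 : (0 < k)%N by apply: hk; rewrite -hroot.
have [lam [hlam _]] := mu_const hmu hlc.
have hvl : in_value_group mu (Some lam) by exists (lead_coef g); split.
rewrite hr -mul_polyC (mu_mul hmu) hlam hp /=.
split.
- move=> hv.
  have hv2 : in_value_group mu (Some (dl *+ k)).
    have := vg_add hmu hv (vg_opp hmu (vg_add hmu hvl hw)).
    by rewrite addrCA addrK.
  case: hv2 => [c [hc hcv]].
  have [rt hrt] : exists x, root ('X^k - c%:P) x.
    by apply/closed_rootP; rewrite size_XnsubC // eqSS -lt0n.
  move: hrt; rewrite /root hornerD hornerN hornerXn hornerC subr_eq0 => /eqP hrt.
  have hrt0 : rt != 0.
    by apply: contraNneq hc => h0; rewrite -hrt h0 expr0n eqn0Ngt hk0.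
  have [m [hm _]] := mu_const hmu hrt0.
  exists rt; split => //; rewrite hm; congr Some.
  have := mu_exp hmu k hm; rewrite -polyC_exp hrt hcv => -[h].
  apply/eqP; rewrite -subr_eq0; apply/eqP; apply: (og_tf O hk0).
  by rewrite mulrnBl h subrr.
- move=> hv; apply: (vg_add hmu hvl); apply: (vg_add hmu _ hw).
  elim: k {hk hk0 hp} => [|k IH]; first by rewrite mulr0n; exists 1; split; [exact: oner_neq0|case: hmu].
  by rewrite mulrS; exact: (vg_add hmu hv IH).
Qed.
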